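(* Let $n>2k$, $k\ge t+3$, and let $\mathcal F\subseteq\binom{[n]}{k}$ be a maximal $t$-intersecting family with $\tau_t(\mathcal F)=t+2$ and $\tau_t(\mathcal T_t(\mathcal F))=t+2$. If $\mathcal T_t(\mathcal F)=\binom{Z}{t+2}$ for some $Z\in\binom{[n]}{t+4}$, then: (i) $\mathcal F=\{F\in\binom{[n]}{k}: |F\cap Z|\ge t+2\}$; (ii) $|\mathcal F|>\binom{t+4}{2}\left(\binom{n-t-2}{k-t-2}-2\binom{n-t-3}{k-t-3}\right)$.
   Context: A family is $t$-intersecting if any two members meet in at least $t$ elements. A $t$-cover of a family $\mathcal G$ of subsets of $[n]$ is a set $S\subseteq[n]$ with $|S\cap G|\ge t$ for all $G\in\mathcal G$; $\tau_t(\mathcal G)$ is the minimum size of a $t$-cover, and $\mathcal T_t(\mathcal G)$ is the set of all $t$-covers of $\mathcal G$ of size $\tau_t(\mathcal G)$. A $t$-intersecting $\mathcal F\subseteq\binom{[n]}{k}$ is maximal if no $t$-intersecting subfamily of $\binom{[n]}{k}$ properly contains it. *)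

(* Defs.v *)
(* Ground set [n] is modelled as 'I_n. *)
From mathcomp Require Import all_boot all_order all_algebra.
Set Implicit Arguments. Unset Strict Implicit. Unset Printing Implicit Defensive.

Definition ksets (n k : nat) : {set {set 'I_n}} := [set A : {set 'I_n} | #|A| == k].

Definition ksubsets (n : nat) (Z : {set 'I_n}) (k : nat) : {set {set 'I_n}} :=
  [set A : {set 'I_n} | (A \subset Z) && (#|A| == k)].

Definition t_intersecting (n t : nat) (F : {set {set 'I_n}}) : Prop :=
  forall A B, A \in F -> B \in F -> t <= #|A :&: B|.

Definition maximal_t_intersecting (n k t : nat) (F : {set {set 'I_n}}) : Prop :=
  [/\ F \subset ksets n k, t_intersecting t F &
      forall G : {set {set 'I_n}}, G \subset ksets n k -> t_intersecting t G ->
        F \subset G -> G = F].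

Definition is_tcover (n t : nat) (G : {set {set 'I_n}}) (S : {set 'I_n}) : bool :=
  [forall A in G, t <= #|S :&: A|].

(* tau_t(G): minimum size of a t-cover (n.+1 if there is none) *)
Definition tau_t (n t : nat) (G : {set {set 'I_n}}) : nat :=
  \big[minn/n.+1]_(S : {set 'I_n} | is_tcover t G S) #|S|.

Definition Tcov (n t : nat) (G : {set {set 'I_n}}) : {set {set 'I_n}} :=
  [set S : {set 'I_n} | is_tcover t G S && (#|S| == tau_t t G)].

(* Main.v *)
Require Import Defs.
From mathcomp Require Import all_boot all_order all_algebra.
From mathcomp Require Import zify.

Lemma ex_sub (T : finType) (A : {set T}) (k : nat) :
  k <= #|A| -> exists B : {set T}, B \subset A /\ #|B| = k.
Proof.
move=> hk.
have : 0 < #|[set B : {set T} | B \subset A & #|B| == k]|.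
  by rewrite cards_draws bin_gt0.
case/card_gt0P => B; rewrite inE => /andP[h1 /eqP h2]; by exists B.
Qed.

Arguments ex_sub {T A k}.

Lemma card_ksubsets n (Z : {set 'I_n}) k : #|ksubsets Z k| = 'C(#|Z|, k).
Proof. by rewrite /ksubsets cards_draws. Qed.

Lemma bigmin_le (T : eqType) (s : seq T) (P : pred T) (F : T -> nat) S N: S \in s -> P S -> \big[minn/N]_(i <- s | P i) F i <= F S.
Proof. move=> + h; elim: s => // a s IH; rewrite inE big_cons => /orP [/eqP <-|/IH]; rewrite ?h ?geq_minl //.
case: (P a) => //; rewrite geq_min => ->; by rewrite orbT. Qed.

Lemma tau_le n t (G : {set {set 'I_n}}) S : is_tcover t G S -> tau_t t G <= #|S|.
Proof. by move=> h; rewrite /tau_t; apply: bigmin_le; rewrite ?mem_index_enum. Qed.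

Lemma split_ZC n (Z B C : {set 'I_n}) : B \subset Z -> C \subset ~: Z ->
  [/\ (B :|: C) :&: Z = B, (B :|: C) :&: ~: Z = C & B :&: C = set0].
Proof.
move=> BZ CZ; have hB := subsetP BZ; have hC := subsetP CZ.
split; apply/setP => x; rewrite !inE; move: (hB x) (hC x); rewrite inE;
  case: (x \in B); case: (x \in C); case: (x \in Z) => //= h1 h2;
  by [move: (h1 isT) | move: (h2 isT)].
Qed.

Arguments split_ZC {n Z B C}.

Theorem lemma2p11 (n k t : nat) (F : {set {set 'I_n}}) (Z : {set 'I_n}) :
  2 * k < n -> t + 3 <= k ->
  maximal_t_intersecting k t F ->
  tau_t t F = t + 2 ->
  tau_t t (Tcov t F) = t + 2 ->
  #|Z| = t + 4 ->
  Tcov t F = ksubsets Z (t + 2) ->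
  F = [set A : {set 'I_n} | (#|A| == k) && (t + 2 <= #|A :&: Z|)] /\
  (Posz 'C(t + 4, 2) * (Posz 'C(n - t - 2, k - t - 2) - 2 * Posz 'C(n - t - 3, k - t - 3))
     < Posz #|F|)%R.
Proof.
move=> hn hk [FK Fint Fmax] htau _ hZ hT.
have t1 : 0 < t.
  case: t hk htau hZ hT {Fint Fmax} => // hk htau.
  have : is_tcover 0 F set0 by apply/forallP => A; apply/implyP.
  by move/tau_le; rewrite htau cards0.
set H := [set A : {set 'I_n} | (#|A| == k) && (t + 2 <= #|A :&: Z|)].
have FH : F \subset H.
  apply/subsetP => A AF; rewrite inE.
  have /subsetP/(_ _ AF) := FK; rewrite inE => ->/=.
  rewrite leqNgt; apply/negP => small.
  have h3 : 3 <= #|Z :\: A|.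
    have := cardsID A Z; rewrite (setIC Z A). move=> HH. set x := #|A :&: Z| in small HH. lia.
  have [D [DZ cD]] := ex_sub h3.
  have h4 : t - 1 <= #|Z :\: D|.
    have := cardsID D Z; rewrite (setIidPr (subset_trans DZ (subsetDl _ _))); lia.
  have [E [EZ cE]] := ex_sub h4.
  have DA : D :&: A = set0.
    apply/setP => x; rewrite !inE; apply/negP => /andP[xD xA].
    by have := subsetP DZ x xD; rewrite inE xA.
  have dDE : [disjoint D & E].
    rewrite -setI_eq0; apply/eqP/setP => x; rewrite !inE; apply/negP => /andP[xD xE].
    by have := subsetP EZ x xE; rewrite inE xD.
  have SZ : D :|: E \subset Z.
    by rewrite subUset (subset_trans DZ (subsetDl _ _)) (subset_trans EZ (subsetDl _ _)).
  have Scov : D :|: E \in Tcov t F.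
    rewrite hT inE SZ /= cardsU.
    move: dDE; rewrite -setI_eq0 => /eqP ->; rewrite cards0 cD cE; apply/eqP; lia.
  move: Scov; rewrite inE => /andP[/forallP/(_ A) /implyP/(_ AF) cov _].
  have : #|(D :|: E) :&: A| <= #|E|.
    by apply: subset_leq_card; rewrite setIUl DA set0U subsetIl.
  lia.
have HF : H = F.
  apply: Fmax => //.
    by apply/subsetP => A; rewrite !inE => /andP[-> _].
  move=> A B; rewrite !inE => /andP[_ hA] /andP[_ hB].
  have hU : #|(A :&: Z) :|: (B :&: Z)| <= t + 4.
    by rewrite -hZ; apply: subset_leq_card; rewrite subUset !subsetIr.
  have := cardsU (A :&: Z) (B :&: Z).
  have : #|(A :&: Z) :&: (B :&: Z)| <= #|A :&: B|.
    by apply: subset_leq_card; apply/subsetP => x; rewrite !inE => /and3P[/andP[-> _] -> _].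
  have := subset_leq_card (subsetIl (A :&: Z) (B :&: Z)).
  lia.
split; first by rewrite HF.
set m := n - t - 4.
have cZc : #|~: Z| = m.
  have := cardsCs Z; rewrite card_ord; lia.
set P := setX (ksubsets Z (t + 2)) (ksubsets (~: Z) (k - t - 2)).
set f := fun p : {set 'I_n} * {set 'I_n} => p.1 :|: p.2.
have finj : {in P &, injective f}.
  move=> [B1 C1] [B2 C2]; rewrite !inE /= => /andP[/andP[B1Z _] /andP[C1Z _]]
    /andP[/andP[B2Z _] /andP[C2Z _]] /= e.
  have [e1 e2 _] := split_ZC B1Z C1Z; have [e3 e4 _] := split_ZC B2Z C2Z.
  move: e; rewrite /f /= => e.
  have -> : B1 = B2 by rewrite -e1 -e3 e.
  have -> : C1 = C2 by rewrite -e2 -e4 e.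
  by [].
have cardI : #|f @: P| = 'C(t + 4, 2) * 'C(m, k - t - 2).
  rewrite card_in_imset // cardsX !card_ksubsets hZ cZc.
  rewrite -(bin_sub (n := t + 4) (m := 2)); last lia.
  by have -> : t + 4 - 2 = t + 2 by lia.
have imH : f @: P \subset H.
  apply/subsetP => A /imsetP [[B C]]; rewrite !inE /= => /andP[/andP[BZ /eqP cB] /andP[CZ /eqP cC]] ->.
  have [eZ _ dBC] := split_ZC BZ CZ.
  rewrite /f /= cardsU dBC cards0 eZ cB cC; apply/andP; split; [apply/eqP|]; lia.
have [B0 [B0Z cB0]] : exists B0 : {set 'I_n}, B0 \subset Z /\ #|B0| = t + 3.
  by apply: ex_sub; lia.
have [C0 [C0Z cC0]] : exists C0 : {set 'I_n}, C0 \subset ~: Z /\ #|C0| = k - t - 3.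
  by apply: ex_sub; lia.
have [eZ0 _ dBC0] := split_ZC B0Z C0Z.
have A0H : B0 :|: C0 \in H.
  rewrite inE cardsU dBC0 cards0 eZ0 cB0 cC0; apply/andP; split; [apply/eqP|]; lia.
have A0n : B0 :|: C0 \notin f @: P.
  apply/imsetP => [[[B C]]]; rewrite !inE /= => /andP[/andP[BZ /eqP cB] /andP[CZ _]] e.
  have [eZ _ _] := split_ZC BZ CZ.
  move: e; rewrite /f /= => e.
  move: eZ; rewrite -e eZ0 => eB.
  by move: cB0; rewrite eB cB; lia.
have big : 'C(t + 4, 2) * 'C(m, k - t - 2) < #|F|.
  rewrite -HF -cardI.
  have hsub : (B0 :|: C0) |: (f @: P) \subset H by rewrite subUset sub1set A0H imH.
  by have := subset_leq_card hsub; rewrite cardsU1 A0n.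
have pas : 'C(n - t - 2, k - t - 2) <= 'C(m, k - t - 2) + 2 * 'C(n - t - 3, k - t - 3).
  have e1 : n - t - 2 = m.+2 by lia.
  have e2 : k - t - 2 = (k - t - 3).+1 by lia.
  have e3 : n - t - 3 = m.+1 by lia.
  rewrite e1 e2 e3 binS binS.
  have := leq_bin2l (k - t - 3) (leqnSn m). lia.
move: big pas.
move: ('C(t + 4, 2)) ('C(n - t - 2, k - t - 2)) ('C(n - t - 3, k - t - 3)) ('C(m, k - t - 2)) (#|F|) => c X Y a N big pas.
have h : c * X <= c * a + c * (2 * Y) by rewrite -mulnDr leq_mul2l pas orbT.
nia.
Qed.
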